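(* Let $a\ge 0$, $b$ integers and $0\le k\le a$. Let $a_1,a_2,b_1,b_2$ be integers with $0\le a_1,a_2$, $0\le b_1,b_2$, $a_1+a_2=a-k$, $b_1+b_2=b+2k$. Then $$\sum_{i=0}^{k}\binom{b_1}{i}\binom{b_2}{k-i}\,\Phi(i)=\binom{b+2k}{k}\phi_{2_1}(a_1,b_1)+\binom{b+2k-2}{k-1}\phi_{2_2}(a_1,b_1),$$ where, with $j=k-i$ and $M=4a+2b-4$, $$\Phi(i)=(2a_1+b_1)(2a_2+b_2)(a_1b_2+a_2b_1+2a_1a_2+b_2i+b_1j-2ij)\binom{M}{4a_1+2b_1-2}-(2a_1+b_1)^2(a_1b_2+a_2b_1+2a_1a_2+b_2i+b_1j-2ij)\binom{M}{4a_1+2b_1-1},$$ $$\phi_{2_1}(a_1,b_1)=(2a_1+b_1)(2a_2+b_2)(a_1b_2+a_2b_1+2a_1a_2)\binom{M}{4a_1+2b_1-2}-(2a_1+b_1)^2(a_1b_2+a_2b_1+2a_1a_2)\binom{M}{4a_1+2b_1-1},$$ $$\phi_{2_2}(a_1,b_1)=2(2a_1+b_1)(2a_2+b_2)b_1b_2\binom{M}{4a_1+2b_1-2}-2(2a_1+b_1)^2b_1b_2\binom{M}{4a_1+2b_1-1}.$$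
   Context: Binomial coefficients $\binom{N}{j}$ are $0$ for $j<0$ or $j>N$; $\binom{b+2k-2}{k-1}=0$ for $k=0$. ($\Phi(i)$ equals the $\mathbb{F}_0$ Kontsevich coefficient $\phi_0(a_1+i,a_1+b_1-i)$ computed for the splitting $(a_1+i,b_1-2i)+(a_2+j,b_2-2j)=(a,b)$.) *)

(* Defs.v *)
From HB Require Import structures.
From mathcomp Require Import all_boot all_order all_algebra.
Set Implicit Arguments. Unset Strict Implicit. Unset Printing Implicit Defensive.
Import Order.TTheory GRing.Theory Num.Theory.
Local Open Scope ring_scope.

Definition binz (N j : int) : int :=
  if (0 <= j) && (j <= N) then (('C(`|N|, `|j|))%:Z) else 0.

Definition Mval (a b : int) : int := 4 * a + 2 * b - 4.

Definition Phi (a b a1 a2 b1 b2 k i : int) : int :=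
  let j := k - i in
  let L := a1 * b2 + a2 * b1 + 2 * a1 * a2 + b2 * i + b1 * j - 2 * i * j in
  (2 * a1 + b1) * (2 * a2 + b2) * L * binz (Mval a b) (4 * a1 + 2 * b1 - 2)
  - (2 * a1 + b1) ^+ 2 * L * binz (Mval a b) (4 * a1 + 2 * b1 - 1).

Definition phi21 (a b a1 a2 b1 b2 : int) : int :=
  let L := a1 * b2 + a2 * b1 + 2 * a1 * a2 in
  (2 * a1 + b1) * (2 * a2 + b2) * L * binz (Mval a b) (4 * a1 + 2 * b1 - 2)
  - (2 * a1 + b1) ^+ 2 * L * binz (Mval a b) (4 * a1 + 2 * b1 - 1).

Definition phi22 (a b a1 a2 b1 b2 : int) : int :=
  2 * (2 * a1 + b1) * (2 * a2 + b2) * b1 * b2 * binz (Mval a b) (4 * a1 + 2 * b1 - 2)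
  - 2 * (2 * a1 + b1) ^+ 2 * b1 * b2 * binz (Mval a b) (4 * a1 + 2 * b1 - 1).

(* Main.v *)
Set Warnings "-all".
Require Import Defs.
From HB Require Import structures.
From mathcomp Require Import all_boot all_order all_algebra.
From Stdlib Require Import Ring ArithRing.
Import Order.TTheory GRing.Theory Num.Theory.
Lemma sC n1 n2 K : \sum_(i < K.+1) (K - i) * ('C(n1, i) * 'C(n2, K - i))
  = \sum_(i < K.+1) i * ('C(n2, i) * 'C(n1, K - i)).
Proof.
rewrite (reindex_inj rev_ord_inj) /=; apply: eq_bigr => i _.
have hi : (i <= K)%N by rewrite -ltnS.
by rewrite subSS subKn // [X in _ * X]mulnC.
Qed.
Lemma sB m1 m2 K : \sum_(i < K.+2) i * ('C(m1.+1, i) * 'C(m2, K.+1 - i)) = m1.+1 * 'C(m1 + m2, K).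
Proof.
rewrite big_ord_recl mul0n add0n -binomial.Vandermonde big_distrr /=.
apply: eq_bigr => i _; rewrite /bump /= add1n subSS mulnA -mul_bin_diag /= mulnA //.
Qed.
Lemma sD m1 m2 K : \sum_(i < K.+3) i * (K.+2 - i) * ('C(m1.+1, i) * 'C(m2.+1, K.+2 - i))
  = m1.+1 * m2.+1 * 'C(m1 + m2, K).
Proof.
rewrite big_ord_recl big_ord_recr /= /bump /= !add1n subnn !mul0n muln0 addn0 add0n.
rewrite -binomial.Vandermonde big_distrr /=.
apply: eq_bigr => i _; rewrite /bump /= add1n subSS.
have hi : (i <= K)%N by rewrite -ltnS.
by rewrite subSn // mulnACA -!mul_bin_diag /= mulnACA.
Qed.
Lemma z0 x y : x * ('C(0, x) * y) = 0.
Proof. by case: x => [|x]; rewrite ?mul0n /= ?mul0n ?muln0. Qed.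

Lemma key n1 n2 K :
  n2 * \sum_(i < K.+2) i * ('C(n1,i)*'C(n2,K.+1-i))
  + n1 * \sum_(i < K.+2) (K.+1 - i) * ('C(n1,i)*'C(n2,K.+1-i))
  = 2 * \sum_(i < K.+2) i*(K.+1-i)*('C(n1,i)*'C(n2,K.+1-i)) + 2*n1*n2*'C(n1+n2-2, K).
Proof.
case: n1 => [|m1].
  by rewrite muln0 !mul0n addn0 !big1 ?muln0 // => i _;
    case: (nat_of_ord i) => [|x]; rewrite ?mul0n /= ?mul0n ?muln0.
case: n2 => [|m2].
  by rewrite muln0 !mul0n add0n addn0 !big1 ?muln0 // => i _;
    case: (K.+1 - i)%N => [|x]; rewrite ?mul0n ?muln0 /= ?mul0n ?muln0.
rewrite sC sB sB.
have E : (m1.+1 + m2.+1 - 2 = m1 + m2)%N by rewrite addSn addnS !subSS subn0.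
rewrite E.
case: K => [|K].
  rewrite big1; last by case => [[|[|j]]].
  rewrite !bin0.
  rewrite -!plusE -!multE. ring.
rewrite sD addnS binS addnS [(m2 + m1)%N]addnC binS.
set X := binomial _ K.+1. set Y := binomial _ K. rewrite -!plusE -!multE. ring.
Qed.

Local Open Scope ring_scope.

Lemma binz_nat (n i : nat) : binz n%:Z i%:Z = 'C(n, i)%:Z.
Proof.
rewrite /binz lez_nat /=; case: leqP => // h.
by rewrite bin_small.
Qed.

Lemma gen1 (X Y L P Q : int) : X * L * P - Y * L * Q = L * (X * P - Y * Q).
Proof. by rewrite mulrBr (mulrAC X) (mulrAC Y) (mulrC _ L) (mulrC _ L). Qed.

Lemma gen2 (t x y z u v P Q : int) :
  t * x * y * u * v * P - t * z * u * v * Q = t * u * v * (x * y * P - z * Q).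
Proof.
rewrite mulrBr; congr (_ - _).
  rewrite -!mulrA; congr (_ * _).
  rewrite [y * _]mulrCA [x * _]mulrCA; congr (_ * _).
  by rewrite [RHS]mulrCA (mulrCA v).
by rewrite -!mulrA; congr (_ * _); rewrite [LHS]mulrCA; congr (_ * _); exact: mulrCA.
Qed.

Definition Cst (a b a1 a2 b1 b2 : int) : int :=
  (2 * a1 + b1) * (2 * a2 + b2) * binz (Mval a b) (4 * a1 + 2 * b1 - 2)
  - (2 * a1 + b1) ^+ 2 * binz (Mval a b) (4 * a1 + 2 * b1 - 1).

Lemma Phi_fact a b a1 a2 b1 b2 k i : Phi a b a1 a2 b1 b2 k i =
  (a1 * b2 + a2 * b1 + 2 * a1 * a2 + b2 * i + b1 * (k - i) - 2 * i * (k - i))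
  * Cst a b a1 a2 b1 b2.
Proof. by rewrite /Phi /= gen1. Qed.

Lemma phi21_fact a b a1 a2 b1 b2 : phi21 a b a1 a2 b1 b2 =
  (a1 * b2 + a2 * b1 + 2 * a1 * a2) * Cst a b a1 a2 b1 b2.
Proof. by rewrite /phi21 /= gen1. Qed.

Lemma phi22_fact a b a1 a2 b1 b2 : phi22 a b a1 a2 b1 b2 =
  (2 * b1 * b2) * Cst a b a1 a2 b1 b2.
Proof. by rewrite /phi22 gen2. Qed.

Lemma pw (c L x y z : int) : c * (L + x + y - z) = c * L + (x * c + y * c) - z * c.
Proof.
rewrite mulrBr !mulrDr (mulrC c x) (mulrC c y) (mulrC c z).
by rewrite -(addrA (c * L)).
Qed.

Lemma sumPosz n (F : 'I_n -> nat) : \sum_(i < n) (F i)%:Z = (\sum_(i < n) F i)%N%:Z.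
Proof. by elim/big_rec2: _ => // i x y _ ->; rewrite PoszD. Qed.

Lemma binz2 (n1 n2 K : nat) :
  binz (n1%:Z + n2%:Z - 2) K%:Z * (2 * n1%:Z * n2%:Z)
  = (2 * n1 * n2 * 'C(n1 + n2 - 2, K))%N%:Z.
Proof.
case: n1 => [|m1]; first by rewrite !(mulr0, mul0r, muln0, mul0n).
case: n2 => [|m2]; first by rewrite !(mulr0, mul0r, muln0, mul0n).
have -> : m1.+1%:Z + m2.+1%:Z - 2 = (m1 + m2)%N%:Z.
  by rewrite -PoszD addSn addnS -[(m1 + m2).+2]addn2 PoszD addrK.
rewrite binz_nat addSn addnS -[(m1 + m2).+2]addn2 addnK.
by rewrite mulrC natz -!PoszM.
Qed.

Theorem mainTheorem8 (a b k a1 a2 b1 b2 : int)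
  (ha : 0 <= a) (hk0 : 0 <= k) (hka : k <= a)
  (ha1 : 0 <= a1) (ha2 : 0 <= a2) (hb1 : 0 <= b1) (hb2 : 0 <= b2)
  (hsa : a1 + a2 = a - k) (hsb : b1 + b2 = b + 2 * k) :
  \sum_(0 <= i < (`|k|%N).+1)
      binz b1 (i%:Z) * binz b2 (k - i%:Z) * Phi a b a1 a2 b1 b2 k (i%:Z)
  = binz (b + 2 * k) k * phi21 a b a1 a2 b1 b2
    + binz (b + 2 * k - 2) (k - 1) * phi22 a b a1 a2 b1 b2.
Proof.
rewrite -hsb phi21_fact phi22_fact; clear hsb hsa hka ha.
under eq_bigr do rewrite Phi_fact mulrA.
rewrite -mulr_suml !mulrA -mulrDl; congr (_ * _).
move: hb1 hb2 hk0; case: b1 => [n1|//] _; case: b2 => [n2|//] _; case: k => [K|//] _.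
rewrite absz_nat.
have E (x y z w : int) : x * y * z * w = x * (y * z * w) by rewrite !mulrA.
rewrite [X in _ = _ + X]E -PoszD.
set L0 := (a1 * _ + _ + _).
case: K => [|K].
  rewrite big_nat1 subrr !binz_nat !bin0 mul1r.
  have -> : binz (Posz (n1 + n2)%N - 2) (0%:Z - 1) = 0 by [].
  by rewrite !mulr0 !mul0r !addr0 (mul1r L0).
rewrite [binz _ K.+1]binz_nat.
have -> : K.+1%:Z - 1 = K%:Z by rewrite -addn1 PoszD addrK.
rewrite binz2 big_mkord.
pose c (i : nat) := ('C(n1, i) * 'C(n2, K.+1 - i))%N.
rewrite (eq_bigr (fun i : 'I_K.+2 => (c i)%:Z * L0
   + ((n2 * i * c i + n1 * (K.+1 - i) * c i)%N)%:Z
   - ((2 * i * (K.+1 - i) * c i)%N)%:Z)); last first.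
  move=> i _; have hi : (i <= K.+1)%N by rewrite -ltnS.
  by rewrite subzn // !binz_nat pw natz -!PoszM -PoszD.
rewrite big_split sumrN big_split /= -mulr_suml !sumPosz.
have HA : (\sum_(i < K.+2) c i = 'C(n1 + n2, K.+1))%N by exact: binomial.Vandermonde.
have HD : (\sum_(i < K.+2) (2 * i * (K.+1 - i) * c i) = 2 * \sum_(i < K.+2) (i * (K.+1 - i) * c i))%N.
  by rewrite big_distrr; apply: eq_bigr => i _; rewrite /= !mulnA.
have HB : (\sum_(i < K.+2) (n2 * i * c i + n1 * (K.+1 - i) * c i)
   = 2 * \sum_(i < K.+2) (i * (K.+1 - i) * c i) + 2 * n1 * n2 * 'C(n1 + n2 - 2, K))%N.
  rewrite -key big_split /= !big_distrr /=; congr (_ + _); apply: eq_bigr => i _; by rewrite mulnA.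
rewrite HA HB HD PoszD addrA addrAC addrK.
done.
Qed.
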